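(* Let $u\ge1$ be an integer, $H$ a graph with $\mathrm{dom}(H)\ge u$, and $\Delta\ge\omega\ge\omega_0(H^{\downarrow u})+u$. Let $G$ be a $\{K_u\vee I_{\Delta+1},K_{\omega+1}\}$-free graph such that every $u$-clique $c$ of $G$ with $c\subseteq\mathrm{Dom}(J)$ for some $J\in\mathcal{H}(G)$ satisfies $\omega(c)\ge\omega_0(H^{\downarrow u})+u$. Then \[\mathcal{N}(H,G)\le\frac{\mathcal{N}(H^{\downarrow u},\mathrm{T}_{\omega-u}(\Delta))\,k^u(G)}{\binom{\mathrm{dom}(H)}{u}}.\]
   Context: All graphs are finite and simple. $\mathcal{N}(H,G)$ is the number of (not necessarily induced) subgraphs of $G$ isomorphic to $H$, $\mathcal{H}(G)$ is the set of such subgraphs, and $k^u(G)$ is the number of $u$-cliques of $G$ (cliques identified with vertex sets). A graph is $\mathcal{F}$-free if it has no subgraph isomorphic to a member of $\mathcal{F}$. $K_u\vee I_{\Delta+1}$ is the complete split graph: a $u$-clique, an independent set of $\Delta+1$ vertices, and all edges between them. $\mathrm{T}_r(n)$ is the Turán graph (complete $r$-partite on $n$ vertices with part sizes $\lfloor n/r\rfloor$ or $\lceil n/r\rceil$). A dominating vertex of a graph $J$ is a vertex adjacent in $J$ to all other vertices of $J$; $\mathrm{Dom}(J)$ is their set and $\mathrm{dom}(J)=|\mathrm{Dom}(J)|$. $H^{\downarrow u}$ is $H$ with $u$ dominating vertices deleted. For a $u$-clique $c$ of $G$, $\omega(c)$ is the maximum size of a clique of $G$ containing $c$. For a graph $F$,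 $\omega_0(F)$ is the least positive integer such that for every integer $r\ge\omega_0(F)$ and every $n\ge1$, every $n$-vertex $K_{r+1}$-free graph $G'$ satisfies $\mathcal{N}(F,G')\le\mathcal{N}(F,\mathrm{T}_r(n))$ (it exists by a theorem of Morrison et al.). *)

(* Defs.v *)
(* Graphs: a finite simple graph is a finType of vertices with a
   symmetric irreflexive boolean adjacency relation. *)
From mathcomp Require Import all_boot all_order all_algebra.
Set Implicit Arguments. Unset Strict Implicit. Unset Printing Implicit Defensive.

Section Graphs.
Variables (V T : finType) (eV : rel V) (eT : rel T).

(* A subgraph of (T,eT) is a pair (S, F): vertex set S and edge set F given as a
   set of ordered pairs (both orientations). *)
Definition is_copy (S : {set T}) (F : {set T * T}) : bool :=
  [&& [forall p in F, eT p.1 p.2 && (p.1 \in S) && (p.2 \in S)] &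
      [exists f : {ffun V -> T},
         [&& injectiveb f, (f @: setT == S) &
             [forall x, forall y, eV x y == ((f x, f y) \in F)]]]].

Definition Ncopies : nat :=
  #|[set p : {set T} * {set T * T} | is_copy p.1 p.2]|.

Definition contains : bool := 0 < Ncopies.
End Graphs.

Section Cliques.
Variables (T : finType) (e : rel T).

Definition is_clique (S : {set T}) : bool :=
  [forall x in S, forall y in S, (x != y) ==> e x y].

Definition kcl (u : nat) : nat := #|[set S : {set T} | is_clique S & #|S| == u]|.

Definition omega_of (c : {set T}) : nat :=
  \max_(S : {set T} | is_clique S && (c \subset S)) #|S|.

Definition DomG : {set T} := [set x | [forall y, (y != x) ==> e x y]].
Definition domG : nat := #|DomG|.

Definition DomSub (S : {set T}) (F : {set T * T}) : {set T} :=
  [set x in S | [forall y in S, (y != x) ==> ((x, y) \in F)]].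

Definition downset (u : nat) : {set T} := [set x in take u (enum DomG)].

Definition Hdown (u : nat) : rel {x : T | x \notin downset u} :=
  fun x y => e (val x) (val y).
End Cliques.

Definition complete (n : nat) : rel 'I_n := fun i j => i != j.

Definition turan (r n : nat) : rel 'I_n := fun i j => (i %% r) != (j %% r).

Definition split_graph (u m : nat) : rel ('I_u + 'I_m)%type :=
  fun a b => match a, b with
             | inl i, inl j => i != j
             | inl _, inr _ => true
             | inr _, inl _ => true
             | inr _, inr _ => false
             end.

Arguments complete : clear implicits.
Arguments turan : clear implicits.
Arguments split_graph : clear implicits.
Arguments kcl : clear implicits.
Arguments Hdown {T} e u _ _.

Definition omega0_good (VF : finType) (F : rel VF) (r0 : nat) : Prop :=
  forall r n : nat, r0 <= r -> 0 < n ->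
    forall e' : rel 'I_n, symmetric e' -> irreflexive e' ->
      ~~ contains (complete r.+1) e' ->
      Ncopies F e' <= Ncopies F (turan r n).

Definition is_omega0 (VF : finType) (F : rel VF) (w0 : nat) : Prop :=
  [/\ 0 < w0, omega0_good F w0 & forall r, 0 < r < w0 -> ~ omega0_good F r].

(* Main.v *)
Require Import Defs.
From mathcomp Require Import all_boot all_order all_algebra.
Import Order.TTheory GRing.Theory Num.Theory.
Set Implicit Arguments. Unset Strict Implicit. Unset Printing Implicit Defensive.


Section Transfer.
Variables (VF T1 T2 : finType) (HF : rel VF) (e1 : rel T1) (e2 : rel T2) (g : T1 -> T2).
Hypothesis ginj : injective g.
Hypothesis gind : forall x y, e1 x y = e2 (g x) (g y).

Definition gpair (p : T1 * T1) : T2 * T2 := (g p.1, g p.2).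
Lemma gpair_inj : injective gpair.
Proof. by move=> [a b] [c d] [/ginj -> /ginj ->]. Qed.

Lemma phi_copy S F : is_copy HF e1 S F -> is_copy HF e2 (g @: S) (gpair @: F).
Proof.
move=> /andP[/forallP H1 /existsP[f /and3P[/injectiveP finj /eqP fim /forallP fe]]].
apply/andP; split.
  apply/forallP=> q; apply/implyP=> /imsetP[p pF ->] /=.
  have := H1 p; rewrite pF /= => /andP[/andP[ep p1S] p2S].
  by rewrite -gind ep !imset_f.
apply/existsP; exists [ffun x => g (f x)].
apply/and3P; split.
- by apply/injectiveP => x y; rewrite !ffunE => /ginj; exact: finj.
- apply/eqP; rewrite -fim -imset_comp; apply: eq_imset => x; by rewrite ffunE.
- apply/forallP=> x; apply/forallP=> y; rewrite !ffunE.
  have /forallP/(_ y)/eqP-> := fe x.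
  by rewrite -[(g (f x), g (f y))]/(gpair (f x, f y)) (mem_imset _ _ gpair_inj).
Qed.

Definition phi (p : {set T1} * {set T1 * T1}) := (g @: p.1, gpair @: p.2).

Lemma phi_inj : injective phi.
Proof.
move=> [S F] [S' F'] [] /(imset_inj ginj) -> /(imset_inj gpair_inj) -> //.
Qed.

Lemma Ncopies_le : Ncopies HF e1 <= Ncopies HF e2.
Proof.
rewrite /Ncopies -(card_imset _ phi_inj); apply: subset_leq_card.
apply/subsetP=> q /imsetP[p]; rewrite inE => pc ->; rewrite inE /=.
exact: phi_copy.
Qed.

Lemma copy_back S F : is_copy HF e2 S F -> S \subset g @: setT ->
  exists2 p, is_copy HF e1 p.1 p.2 & (S, F) = phi p.
Proof.
move=> /andP[/forallP H1 /existsP[f /and3P[/injectiveP finj /eqP fim /forallP fe]]] Sg.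
have Hc x : f x \in codom g.
  have : f x \in S by rewrite -fim imset_f.
  by move=> /(subsetP Sg) /imsetP[y _ ->]; rewrite codom_f.
pose f1 := [ffun x => iinv (Hc x)].
have gf1 x : g (f1 x) = f x by rewrite ffunE f_iinv.
have Fsub q : q \in F -> exists2 p, q = gpair p & p \in gpair @^-1: F.
  move=> qF; have := H1 q; rewrite qF /= => /andP[/andP[_ /(subsetP Sg)/imsetP[a _ ea]] /(subsetP Sg)/imsetP[b _ eb]].
  exists (a, b); first by rewrite /gpair /= -ea -eb; case: (q).
  by rewrite inE /gpair /= -ea -eb; case: (q) qF.
exists (g @^-1: S, gpair @^-1: F).
  apply/andP; split.
    apply/forallP=> p; apply/implyP; rewrite !inE /= => pF.
    have := H1 (gpair p); rewrite pF /= => /andP[/andP[ep p1S] p2S].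
    by rewrite gind ep p1S p2S.
  apply/existsP; exists f1; apply/and3P; split.
  - by apply/injectiveP=> x y e; apply: finj; rewrite -!gf1 e.
  - apply/eqP/setP=> a; rewrite inE -fim.
    apply/imsetP/imsetP=> [[x _ ->]|[x _ ea]]; first by exists x; rewrite ?gf1.
    by exists x => //; apply: ginj; rewrite gf1.
  - apply/forallP=> x; apply/forallP=> y; rewrite inE /gpair /= !gf1.
    exact: (forallP (fe x) y).
rewrite /phi /=; congr (_, _); apply/setP=> z.
  apply/idP/imsetP=> [zS|[a]]; last by rewrite inE => aS ->.
  by have /imsetP[a _ ea] := subsetP Sg _ zS; exists a; rewrite // inE -ea.
apply/idP/imsetP=> [zF|[a]]; last by rewrite inE => aS ->.
by have [p -> pin] := Fsub z zF; exists p.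
Qed.

Lemma Ncopies_inside_le :
  #|[set p : {set T2} * {set T2 * T2} | is_copy HF e2 p.1 p.2 & p.1 \subset g @: setT]|
    <= Ncopies HF e1.
Proof.
rewrite /Ncopies -(card_imset _ phi_inj); apply: subset_leq_card.
apply/subsetP=> [[S F]]; rewrite inE /= => /andP[c sub].
have [p pc ->] := copy_back c sub.
by apply: imset_f; rewrite inE.
Qed.
End Transfer.

Section Contains.
Variables (VF T : finType) (HF : rel VF) (e : rel T).

Lemma contains_hom : contains HF e ->
  exists f : VF -> T, injective f /\ forall x y, HF x y -> e (f x) (f y).
Proof.
rewrite /contains /Ncopies card_gt0 => /set0Pn[[S F]]; rewrite inE /=.
move=> /andP[/forallP H1 /existsP[f /and3P[/injectiveP finj _ /forallP fe]]].
exists f; split => // x y hxy.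
have /forallP/(_ y)/eqP := fe x; rewrite hxy => /esym fF.
by have := H1 (f x, f y); rewrite fF /= => /andP[/andP[-> _] _].
Qed.

Lemma hom_contains (h : VF -> T) : injective h ->
  (forall x y, HF x y -> e (h x) (h y)) -> contains HF e.
Proof.
move=> hinj hom.
pose hp (p : VF * VF) := (h p.1, h p.2).
have hpinj : injective hp by move=> [a b] [c d] [/hinj -> /hinj ->].
rewrite /contains /Ncopies card_gt0; apply/set0Pn.
exists (h @: setT, hp @: [set p | HF p.1 p.2]); rewrite inE /=.
apply/andP; split.
  apply/forallP=> q; apply/implyP=> /imsetP[p]; rewrite inE => pF -> /=.
  by rewrite hom // !imset_f.
apply/existsP; exists [ffun x => h x]; apply/and3P; split.
- by apply/injectiveP=> x y; rewrite !ffunE => /hinj.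
- by apply/eqP; apply: eq_imset => x; rewrite ffunE.
- apply/forallP=> x; apply/forallP=> y; rewrite !ffunE.
  by rewrite -[(h x, h y)]/(hp (x, y)) (mem_imset _ _ hpinj) inE.
Qed.
End Contains.

Section Cliq.
Variables (T : finType) (e : rel T).
Lemma clique_contains (A : {set T}) m : is_clique e A -> m <= #|A| ->
  contains (complete m) e.
Proof.
move=> /forallP cl hm.
apply: (@hom_contains _ _ _ _ (fun i => enum_val (widen_ord hm i))).
  by move=> i j /enum_val_inj /(congr1 val) /= /val_inj.
move=> i j; rewrite /complete => ij.
have := cl (enum_val (widen_ord hm i)); rewrite enum_valP /= => /forallP/(_ (enum_val (widen_ord hm j))).
rewrite enum_valP /= => /implyP; apply.
by apply/eqP => /enum_val_inj /(congr1 val) /= /val_inj; apply/eqP.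
Qed.
End Cliq.

Lemma eqcard_bij (V : finType) (A B : {set V}) : #|A| = #|B| ->
  exists h : V -> V, {in A &, injective h} /\ h @: A = B.
Proof.
move=> AB.
pose h x := nth x (enum B) (index x (enum A)).
have hlt x : x \in A -> index x (enum A) < size (enum B).
  by move=> xA; rewrite -cardE -AB cardE index_mem mem_enum.
have hinj : {in A &, injective h}.
  move=> x y xA yA; rewrite /h [nth y _ _](set_nth_default x) ?hlt // => /eqP.
  rewrite nth_uniq ?hlt ?enum_uniq // => /eqP.
  by apply: index_inj; rewrite ?mem_enum.
exists h; split => //; apply/eqP; rewrite eqEcard (card_in_imset hinj) AB leqnn andbT.
apply/subsetP=> _ /imsetP[x xA ->].
by rewrite -mem_enum /h mem_nth ?hlt.
Qed.

Section HSide.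
Variables (V : finType) (eH : rel V) (symH : symmetric eH) (irrH : irreflexive eH).
Variable u : nat.
Hypothesis hdom : u <= domG eH.

Lemma dom_adjl x y : x \in DomG eH -> eH x y = (x != y).
Proof.
rewrite inE => /forallP/(_ y); case: (eqVneq x y) => [<-|ne].
  by rewrite irrH.
by move=> /implyP ->.
Qed.

Lemma dom_adjr x y : y \in DomG eH -> eH x y = (x != y).
Proof. by move=> yD; rewrite symH dom_adjl // eq_sym. Qed.

Lemma downset_sub : downset eH u \subset DomG eH.
Proof. by apply/subsetP=> x; rewrite inE => /mem_take; rewrite mem_enum. Qed.

Lemma card_downset : #|downset eH u| = u.
Proof.
rewrite /downset cardsE.
have /card_uniqP -> : uniq (take u (enum (DomG eH))) by apply: take_uniq; exact: enum_uniq.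
by rewrite size_takel // -cardE.
Qed.

Lemma down_iso (D : {set V}) : D \subset DomG eH -> #|D| = u ->
  exists phi : {x : V | x \notin downset eH u} -> V,
   [/\ injective phi, forall x, phi x \notin D,
       forall z, z \notin D -> exists x, phi x = z &
       forall x y, eH (val x) (val y) = eH (phi x) (phi y)].
Proof.
move=> DD cD.
have [h [hinj him]] : exists h : V -> V, {in DomG eH :\: downset eH u &, injective h} /\
   h @: (DomG eH :\: downset eH u) = DomG eH :\: D.
  by apply: eqcard_bij; rewrite !cardsDS ?downset_sub // card_downset cD.
have hA a : a \in DomG eH -> a \notin downset eH u -> h a \in DomG eH :\: D.
  by move=> aD ad; rewrite -him imset_f // inE ad aD.
pose phi (x : {x : V | x \notin downset eH u}) :=
  if val x \in DomG eH then h (val x) else val x.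
have phiD x : val x \in DomG eH -> phi x \in DomG eH.
  by move=> xd; rewrite /phi xd; have := hA _ xd (valP x); rewrite inE => /andP[].
have phiN x : val x \notin DomG eH -> phi x = val x.
  by rewrite /phi => /negPf ->.
exists phi; split.
- move=> x y; rewrite /phi.
  case: ifP => xd; case: ifP => yd.
  + by move=> /hinj e; apply: val_inj; apply: e; rewrite inE ?xd ?yd (valP x, valP y).
  + by move=> e; have := hA _ xd (valP x); rewrite e inE yd andbF.
  + by move=> e; have := hA _ yd (valP y); rewrite -e inE xd andbF.
  + exact: val_inj.
- move=> x; rewrite /phi; case: ifP => xd.
    by have := hA _ xd (valP x); rewrite inE => /andP[].
  by apply: contraFN xd => /(subsetP DD).
- move=> z zD; case: (boolP (z \in DomG eH)) => zd.
    have : z \in h @: (DomG eH :\: downset eH u) by rewrite him inE zD.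
    move=> /imsetP[a]; rewrite inE => /andP[ad aD] ->.
    by exists (exist _ a ad); rewrite /phi /= aD.
  have zd' : z \notin downset eH u by apply: contra zd => /(subsetP downset_sub).
  by exists (exist _ z zd'); rewrite /phi /= (negPf zd).
- move=> x y; case: (boolP (val x \in DomG eH)) => xd.
    rewrite !dom_adjl ?phiD //.
    case: (boolP (val y \in DomG eH)) => yd.
      rewrite /phi xd yd; apply/idP/idP; apply: contra => /eqP e; apply/eqP => //.
        by apply: hinj; rewrite // inE ?xd ?yd (valP x, valP y).
      by rewrite e.
    rewrite (phiN _ yd).
    have -> : (phi x != val y) by apply: contraNneq yd => <-; rewrite phiD.
    by have -> : (val x != val y) by apply: contraNneq yd => <-.
  rewrite (phiN _ xd).
  case: (boolP (val y \in DomG eH)) => yd.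
    rewrite !dom_adjr ?phiD //.
    have -> : (val x != phi y) by apply: contraNneq xd => ->; rewrite phiD.
    by have -> : (val x != val y) by apply: contraNneq xd => ->.
  by rewrite (phiN _ yd).
Qed.
End HSide.

Section GSide.
Variables (T : finType) (eG : rel T) (symG : symmetric eG) (irrG : irreflexive eG).

Definition Nc (c : {set T}) : {set T} := [set x | [forall y in c, eG x y]].

Lemma Nc_notin c x : x \in Nc c -> x \notin c.
Proof.
rewrite inE => /forallP/(_ x); apply: contraL => xc.
by rewrite xc irrG.
Qed.

Lemma Nc_adj c x y : x \in Nc c -> y \in c -> eG x y.
Proof. by rewrite inE => /forallP/(_ y) /implyP; apply. Qed.

Lemma Nc_card (c : {set T}) u Delta : is_clique eG c -> #|c| = u ->
  ~~ contains (split_graph u Delta.+1) eG -> #|Nc c| <= Delta.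
Proof.
move=> /forallP cl cu free; rewrite leqNgt; apply: contra free => hlt.
pose h (a : 'I_u + 'I_Delta.+1) : T :=
  match a with inl i => enum_val (cast_ord (esym cu) i)
             | inr j => enum_val (widen_ord hlt j) end.
have hc i : h (inl i) \in c by exact: enum_valP.
have hN j : h (inr j) \in Nc c by exact: enum_valP.
apply: (@hom_contains _ _ _ _ h).
  move=> [i|j] [i'|j'] /=.
  - by move=> /enum_val_inj /cast_ord_inj ->.
  - by move=> e; have := hN j'; rewrite /= -e => /Nc_notin; rewrite hc.
  - by move=> e; have := hN j; rewrite /= e => /Nc_notin; rewrite hc.
  - by move=> /enum_val_inj /(congr1 val) /= /val_inj ->.
move=> [i|j] [i'|j'] //=.
- rewrite /split_graph => ne.
  have := cl (h (inl i)); rewrite hc /= => /forallP/(_ (h (inl i'))).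
  rewrite hc /= => /implyP; apply.
  by apply/eqP => /enum_val_inj /cast_ord_inj /eqP; apply/negP.
- by move=> _; rewrite symG; apply: Nc_adj; [exact: hN | exact: hc].
- by move=> _; apply: Nc_adj; [exact: hN | exact: hc].
Qed.

Lemma Nc_free (c : {set T}) u omega : is_clique eG c -> #|c| = u -> u <= omega ->
  ~~ contains (complete omega.+1) eG ->
  ~~ contains (complete (omega - u).+1)
     (fun i j : 'I_#|Nc c| => eG (enum_val i) (enum_val j)).
Proof.
move=> /forallP cl cu uo free; apply: contra free => /contains_hom[h [hinj hom]].
pose k i := enum_val (h i).
have kinj : injective k by move=> i j /enum_val_inj /hinj.
have kN i : k i \in Nc c by exact: enum_valP.
apply: (@clique_contains _ _ (c :|: [set k i | i in setT])).
  apply/forallP=> x; apply/implyP=> xA; apply/forallP=> y; apply/implyP=> yA.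
  apply/implyP=> ne.
  move: xA yA ne; rewrite !inE => /orP[xc|/imsetP[i _ ->]] /orP[yc|/imsetP[j _ ->]] ne.
  - by have := cl x; rewrite xc /= => /forallP/(_ y); rewrite yc ne.
  - by rewrite symG; apply: Nc_adj.
  - by apply: Nc_adj.
  - by apply: hom; rewrite /complete; apply/eqP => ij; move: ne; rewrite ij eqxx.
have dis : c :&: [set k i | i in setT] = set0.
  apply/setP=> x; rewrite !inE; apply/negP => /andP[xc /imsetP[i _ ex]].
  by have := Nc_notin (kN i); rewrite -ex xc.
have := cardsUI c [set k i | i in setT]; rewrite dis cards0 addn0 => ->.
by rewrite card_imset // cardsT card_ord cu addnS subnKC.
Qed.
End GSide.

Section Rm.
Variables (T : finType) (eG : rel T) (symG : symmetric eG) (irrG : irreflexive eG).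
Variables (V : finType) (eH : rel V) (symH : symmetric eH) (irrH : irreflexive eH).
Variable u : nat.
Hypothesis hdom : u <= domG eH.

Lemma copy_data S F : is_copy eH eG S F ->
  exists f : V -> T, [/\ injective f, f @: setT = S,
    forall a b, ((f a, f b) \in F) = eH a b &
    forall p, p \in F -> [&& eG p.1 p.2, p.1 \in S & p.2 \in S]].
Proof.
move=> /andP[/forallP H1 /existsP[f /and3P[/injectiveP finj /eqP fim /forallP fe]]].
exists f; split => //.
- by move=> a b; have /forallP/(_ b)/eqP-> := fe a.
- by move=> p pF; have := H1 p; rewrite pF /= -andbA.
Qed.

Lemma DomSub_img (S : {set T}) (F : {set T * T}) (f : V -> T) : injective f -> f @: setT = S ->
  (forall a b, ((f a, f b) \in F) = eH a b) ->
  DomSub S F = f @: DomG eH.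
Proof.
move=> finj fim fe; apply/setP=> x; rewrite inE.
case: (boolP (x \in S)) => /= xS; last first.
  by apply/esym/negP=> /imsetP[a _ ea]; move: xS; rewrite -fim ea imset_f.
have := xS; rewrite -fim => /imsetP[a _ ->].
rewrite (mem_imset _ _ finj) inE.
apply/forallP/forallP=> H b.
  apply/implyP=> ba; have := H (f b); rewrite imset_f //= => /implyP; rewrite fe; apply.
  by apply: contra ba => /eqP /finj ->.
apply/implyP => /imsetP[b' _ ->]; apply/implyP => ne; rewrite fe.
have /implyP := H b'; apply; by apply: contra ne => /eqP ->.
Qed.

Definition rm (c : {set T}) (J : {set T} * {set T * T}) :=
  (J.1 :\: c, [set p in J.2 | (p.1 \notin c) && (p.2 \notin c)]).

Definition rec (c : {set T}) (q : {set T} * {set T * T}) :=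
  (q.1 :|: c, [set p | (p \in q.2) || [&& p.1 != p.2, p.1 \in q.1 :|: c,
                  p.2 \in q.1 :|: c & (p.1 \in c) || (p.2 \in c)]]).

Lemma rec_rm (c : {set T}) J : is_copy eH eG J.1 J.2 -> c \subset DomSub J.1 J.2 ->
  rec c (rm c J) = J.
Proof.
case: J => S F /= /copy_data[f [finj fim fe Fp]] cD.
have cS : c \subset S by apply: (subset_trans cD); apply/subsetP=> x; rewrite inE => /andP[].
have Fsym x y : (x, y) \in F -> (y, x) \in F.
  move=> xyF; have := Fp _ xyF; rewrite /= => /and3P[_ xS yS].
  move: xyF; rewrite -fim in xS yS.
  by case/imsetP: xS => a _ ->; case/imsetP: yS => b _ ->; rewrite !fe symH.
have Dom x y : x \in c -> y \in S -> y != x -> (x, y) \in F.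
  move=> xc yS ne; have := subsetP cD x xc; rewrite inE => /andP[_ /forallP/(_ y)].
  by rewrite yS /= => /implyP; apply.
have eS : (S :\: c) :|: c = S.
  apply/setP=> x; rewrite !inE; case: (boolP (x \in c)) => xc /=.
    by rewrite ?orbT (subsetP cS).
  by rewrite ?orbF.
rewrite /rec /rm /= eS; congr (_, _).
apply/setP=> [[x y]]; rewrite !inE /=.
apply/idP/idP.
  case/orP => [/andP[] //| /and4P[ne xS yS /orP[xc|yc]]].
    by apply: Dom; rewrite // eq_sym.
  by apply: Fsym; apply: Dom.
move=> xyF; have /and3P[exy xS yS] := Fp _ xyF; rewrite xyF xS yS /=.
have ne : x != y by apply: contraTneq exy => ->; rewrite irrG.
by rewrite ne; case: (x \in c); case: (y \in c).
Qed.

Lemma rm_copy (c : {set T}) J : is_copy eH eG J.1 J.2 -> c \subset DomSub J.1 J.2 ->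
  #|c| = u -> is_copy (Hdown eH u) eG (rm c J).1 (rm c J).2.
Proof.
case: J => S F /= /copy_data[f [finj fim fe Fp]] cD cu.
rewrite (DomSub_img finj fim fe) in cD.
pose D := f @^-1: c.
have fD : f @: D = c.
  apply/setP=> z; apply/imsetP/idP => [[a]|zc]; first by rewrite inE => ? ->.
  by have /imsetP[a _ ea] := subsetP cD z zc; exists a; rewrite // inE -ea.
have DD : D \subset DomG eH.
  by apply/subsetP=> x; rewrite inE => /(subsetP cD); rewrite (mem_imset _ _ finj).
have cD' : #|D| = u by rewrite -cu -fD card_imset.
have [phi [pinj pD psurj pe]] := down_iso symH irrH hdom DD cD'.
have nc x : f (phi x) \notin c by apply: contra (pD x) => fc; rewrite inE.
apply/andP; split.
  apply/forallP => p; apply/implyP; rewrite /rm /= inE => /andP[pF /andP[p1 p2]].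
  by have /and3P[ep s1 s2] := Fp _ pF; rewrite ep !inE p1 p2 s1 s2.
apply/existsP; exists [ffun x => f (phi x)]; apply/and3P; split.
- by apply/injectiveP => x y; rewrite !ffunE => /finj /pinj.
- apply/eqP/setP => z; rewrite !inE; apply/imsetP/andP.
    by move=> [x _ ->]; rewrite ffunE nc -fim imset_f.
  move=> [zc]; rewrite -fim => /imsetP[a _ ea].
  have aD : a \notin D by rewrite inE -ea.
  by have [x ex] := psurj a aD; exists x => //; rewrite ffunE ex.
- apply/forallP => x; apply/forallP => y; rewrite !ffunE /Hdown !inE /= fe -pe.
  by rewrite !nc !andbT; apply/eqP.
Qed.

Lemma rm_in (c : {set T}) J : is_copy eH eG J.1 J.2 -> c \subset DomSub J.1 J.2 ->
  (rm c J).1 \subset Nc eG c.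
Proof.
case: J => S F /= /copy_data[f [finj fim fe Fp]] cD.
apply/subsetP => x; rewrite inE => /andP[xc xS]; rewrite inE; apply/forallP => y.
apply/implyP => yc.
have := subsetP cD y yc; rewrite inE => /andP[_ /forallP/(_ x)]; rewrite xS /= => /implyP H.
have ne : x != y by apply: contraNneq xc => ->.
by have /and3P[] := Fp _ (H ne); rewrite symG.
Qed.

Lemma c_clique (c : {set T}) J : is_copy eH eG J.1 J.2 -> c \subset DomSub J.1 J.2 ->
  is_clique eG c.
Proof.
case: J => S F /= /copy_data[f [finj fim fe Fp]] cD.
apply/forallP => x; apply/implyP => xc; apply/forallP => y; apply/implyP => yc; apply/implyP => ne.
have := subsetP cD y yc; rewrite inE => /andP[yS _].
have := subsetP cD x xc; rewrite inE => /andP[_ /forallP/(_ y)]; rewrite yS /= => /implyP H.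
have ne' : y != x by rewrite eq_sym.
by have /and3P[] := Fp _ (H ne').
Qed.
End Rm.

Lemma main_nat
  (u : nat) (hu : (1 <= u)%N)
  (V : finType) (eH : rel V) (symH : symmetric eH) (irrH : irreflexive eH)
  (hdom : (u <= domG eH)%N)
  (Delta omega w0 : nat)
  (hw0 : is_omega0 (Hdown eH u) w0)
  (hDo : (omega <= Delta)%N) (hwo : (w0 + u <= omega)%N)
  (T : finType) (eG : rel T) (symG : symmetric eG) (irrG : irreflexive eG)
  (freeKI : ~~ contains (split_graph u Delta.+1) eG)
  (freeK : ~~ contains (complete omega.+1) eG) :
  Ncopies eH eG * 'C(domG eH, u) <=
    Ncopies (Hdown eH u) (turan (omega - u) Delta) * kcl T eG u.
Proof.
set M := Ncopies (Hdown eH u) (turan (omega - u) Delta).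
have [_ good _] := hw0.
have uo : u <= omega by apply: leq_trans hwo; rewrite leq_addl.
have w0r : w0 <= omega - u by rewrite leq_subRL // addnC.
pose P (J : {set T} * {set T * T}) := is_copy eH eG J.1 J.2.
pose Q (J : {set T} * {set T * T}) (c : {set T}) :=
  (c \subset DomSub J.1 J.2) && (#|c| == u).
have step c : \sum_(J | P J && Q J c) 1 <=
    (if is_clique eG c && (#|c| == u) then M else 0).
  rewrite sum1dep_card.
  set X := [set J | P J && Q J c].
  case: (set_0Vmem X) => [-> | [J0]]; first by rewrite cards0.
  rewrite inE => /andP[PJ0 /andP[cD0 /eqP cu]].
  rewrite (c_clique PJ0 cD0) cu eqxx /=.
  have rinj : {in X &, injective (rm c)}.
    move=> J J' JX J'X e.
    move: JX J'X; rewrite !inE => /andP[PJ /andP[cJ _]] /andP[PJ' /andP[cJ' _]].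
    by rewrite -(rec_rm irrG symH PJ cJ) -(rec_rm irrG symH PJ' cJ') e.
  rewrite -(card_in_imset rinj).
  pose g := @enum_val T (mem (Nc eG c)).
  pose e' := fun i j : 'I_#|Nc eG c| => eG (g i) (g j).
  have Ng : Nc eG c \subset g @: setT.
    apply/subsetP => z zN; apply/imsetP; exists (enum_rank_in zN z) => //.
    by rewrite /g enum_rankK_in.
  apply: (@leq_trans (Ncopies (Hdown eH u) e')).
    apply: leq_trans (Ncopies_inside_le (Hdown eH u) (e1 := e') (@enum_val_inj _ _) (fun _ _ => erefl)).
    apply: subset_leq_card; apply/subsetP => _ /imsetP[J JX ->].
    move: JX; rewrite !inE => /andP[PJ /andP[cJ _]].
    rewrite (rm_copy symH irrH hdom PJ cJ cu) /=.
    exact: subset_trans (rm_in symG PJ cJ) Ng.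
  have nD : #|Nc eG c| <= Delta.
    exact: (Nc_card symG irrG (c_clique PJ0 cD0) cu freeKI).
  case: (posnP #|Nc eG c|) => n0.
    apply: (@Ncopies_le _ _ _ _ _ _ (widen_ord nD)); first by move=> i j [] e; apply: val_inj.
    by move=> x; have H: 0 < #|Nc eG c| := leq_ltn_trans (leq0n x) (ltn_ord x); rewrite n0 in H.
  apply: leq_trans (good (omega - u) #|Nc eG c| w0r n0 e' _ _ _) _.
  - by move=> i j; rewrite /e' symG.
  - by move=> i; rewrite /e' irrG.
  - exact: (Nc_free symG irrG (c_clique PJ0 cD0) cu uo freeK).
  apply: (@Ncopies_le _ _ _ _ _ _ (widen_ord nD)); first by move=> i j [] e; apply: val_inj.
  by [].
have eqC J : P J -> \sum_(c | Q J c) 1 = 'C(domG eH, u).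
  case: J => S F PJ; rewrite sum1dep_card.
  have [f [finj fim fe _]] := copy_data PJ.
  rewrite /domG -(card_imset (DomG eH) finj) -(DomSub_img finj fim fe) -cards_draws.
  by apply: eq_card => c; rewrite !inE.
have -> : Ncopies eH eG * 'C(domG eH, u) = \sum_(J | P J) \sum_(c | Q J c) 1.
  by rewrite (eq_bigr _ eqC) sum_nat_cond_const.
rewrite (exchange_big_dep predT) //=.
apply: (@leq_trans (\sum_c (if is_clique eG c && (#|c| == u) then M else 0))); first by apply: leq_sum => c _; exact: step.
rewrite -big_mkcond sum_nat_cond_const mulnC.
by [].
Qed.

Unset Implicit Arguments.
Local Open Scope ring_scope.

Theorem mainTheorem18
  (u : nat) (hu : (1 <= u)%N)
  (V : finType) (eH : rel V) (symH : symmetric eH) (irrH : irreflexive eH)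
  (hdom : (u <= domG eH)%N)
  (Delta omega w0 : nat)
  (hw0 : is_omega0 (Hdown eH u) w0)
  (hDo : (omega <= Delta)%N) (hwo : (w0 + u <= omega)%N)
  (T : finType) (eG : rel T) (symG : symmetric eG) (irrG : irreflexive eG)
  (freeKI : ~~ contains (split_graph u Delta.+1) eG)
  (freeK : ~~ contains (complete omega.+1) eG)
  (hcl : forall c : {set T}, is_clique eG c -> #|c| = u ->
           (exists (S : {set T}) (F : {set T * T}),
              is_copy eH eG S F /\ c \subset DomSub S F) ->
           (w0 + u <= omega_of eG c)%N) :
  ((Ncopies eH eG)%:R : rat) <=
    ((Ncopies (Hdown eH u) (turan (omega - u) Delta) * kcl T eG u)%:R : rat)
      / ('C(domG eH, u))%:R.
Proof.
have H := main_nat hu symH irrH hdom hw0 hDo hwo symG irrG freeKI freeK.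
have C0 : (0 < ('C(domG eH, u))%:R :> rat) by rewrite ltr0n bin_gt0.
by rewrite ler_pdivlMr // -natrM ler_nat.
Qed.
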